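(* Let $X$ be a series-parallel poset, write $Z_X(x)=\sum_{i=1}^{|X|}c_i\frac{x^i}{(1-x)^{i+1}}$, and let $h^*(x)=\sum_{j=0}^{|X|}h^*_jx^j:=\frac{(1-x)^{|X|+1}}{x}Z^+_X(x)$. Then for every $0\le j\le |X|$, \[ h^*_j=\sum_{i=1}^{|X|-j}(-1)^{|X|-i+j}\,c_i\binom{|X|-i}{j}, \] and $c_{|X|}=\sum_{i=0}^{|X|}h^*_i$.
   Context: For $n\ge1$, $\langle n\rangle$ is the chain $1<\dots<n$. For a finite poset $X$, $\Omega(X,n)$ (resp. $\Omega^+(X,n)$) is the number of maps $f:X\to\langle n\rangle$ with $u<v\Rightarrow f(u)<f(v)$ (resp. $u\le v\Rightarrow f(u)\le f(v)$); $Z_X(x)=\sum_{n\ge1}\Omega(X,n)x^n$, $Z^+_X(x)=\sum_{n\ge1}\Omega^+(X,n)x^n$. For a series-parallel poset, $Z_X$ is a finite linear combination $\sum_{i=1}^{|X|}c_i x^i/(1-x)^{i+1}$ (the $c_i$ are uniquely determined). The concatenation $\mu(Y,W)$ is the disjoint union of $Y$ and $W$ with every element of $Y$ below every element of $W$; $Y\sqcup W$ is the disjoint union with no relations. Series-parallel posets form the smallest class of finite posets containing the one-element poset and closed under $\mu$ and $\sqcup$. *)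

(* Defs.v *)
From HB Require Import structures.
From mathcomp Require Import all_boot all_order all_algebra.
Set Implicit Arguments. Unset Strict Implicit. Unset Printing Implicit Defensive.
Import Order.TTheory GRing.Theory Num.Theory.

(* Syntax trees: the one-element poset, concatenation mu(Y,W), disjoint union. *)
Inductive sp_term : Type :=
  | SP_one : sp_term
  | SP_ser : sp_term -> sp_term -> sp_term   (* mu(Y, W): Y below W *)
  | SP_par : sp_term -> sp_term -> sp_term.

Fixpoint sp_car (t : sp_term) : finType :=
  match t with
  | SP_one => unit
  | SP_ser a b => (sp_car a + sp_car b)%type
  | SP_par a b => (sp_car a + sp_car b)%type
  end.

Fixpoint sp_le (t : sp_term) : rel (sp_car t) :=
  match t as t0 return rel (sp_car t0) with
  | SP_one => fun _ _ => true
  | SP_ser a b => fun x y =>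
      match x, y with
      | inl x', inl y' => sp_le x' y'
      | inr x', inr y' => sp_le x' y'
      | inl _, inr _ => true
      | inr _, inl _ => false
      end
  | SP_par a b => fun x y =>
      match x, y with
      | inl x', inl y' => sp_le x' y'
      | inr x', inr y' => sp_le x' y'
      | _, _ => false
      end
  end.

Definition series_parallel (T : finType) (le : rel T) : Prop :=
  exists (t : sp_term) (f : T -> sp_car t),
    bijective f /\ forall x y, le x y = sp_le (f x) (f y).

(* The chain <n> = {1 < ... < n} is represented by 'I_n = {0 < ... < n-1}. *)

Definition Omega (T : finType) (le : rel T) (n : nat) : nat :=
  #|[set g : {ffun T -> 'I_n} |
      [forall u, forall v, ((u != v) && le u v) ==> (g u < g v)%N]]|.

Definition Omega_plus (T : finType) (le : rel T) (n : nat) : nat :=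
  #|[set g : {ffun T -> 'I_n} |
      [forall u, forall v, le u v ==> (g u <= g v)%N]]|.

Local Open Scope ring_scope.

(* Coefficient of x^n in Z_X(x) = sum_{n>=1} Omega(X,n) x^n. *)
Definition Z_coef (T : finType) (le : rel T) (n : nat) : rat :=
  if n is 0 then 0 else (Omega le n)%:R.

(* Coefficient of x^n in Z^+_X(x) = sum_{n>=1} Omega^+(X,n) x^n. *)
Definition Zplus_coef (T : finType) (le : rel T) (n : nat) : rat :=
  if n is 0 then 0 else (Omega_plus le n)%:R.

(* Coefficient of x^n in the power series x^i / (1-x)^(i+1). *)
Definition frac_coef (i n : nat) : rat := ('C(n, i))%:R.

(* h^*_j := coefficient of x^j in (1-x)^(|X|+1) Z^+_X(x) / x, i.e. the
   coefficient of x^(j+1) in the (Cauchy) product (1-x)^(|X|+1) * Z^+_X(x). *)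
Definition hstar (T : finType) (le : rel T) (j : nat) : rat :=
  \sum_(k < j.+2)
     ((1 - 'X) ^+ (#|T|.+1) : {poly rat})`_k * Zplus_coef le (j.+1 - k).

(* Main.v *)
Require Import Defs.
From mathcomp Require Import all_boot all_order all_algebra.
From mathcomp Require Import zify ring.
From Stdlib Require Import FunctionalExtensionality.
Import Order.TTheory GRing.Theory Num.Theory.
Set Implicit Arguments. Unset Strict Implicit. Unset Printing Implicit Defensive.

Definition strictP (A : finType) (le : rel A) (g : A -> nat) : bool :=
  [forall u, forall v, ((u != v) && le u v) ==> (g u < g v)%N].
Definition weakP (A : finType) (le : rel A) (g : A -> nat) : bool :=
  [forall u, forall v, le u v ==> (g u <= g v)%N].
Definition cnt (A : finType) (Q : (A -> nat) -> bool) (n : nat) : nat :=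
  #|[set g : {ffun A -> 'I_n} | Q (fun x => nat_of_ord (g x))]|.

Lemma Omega_cnt (A : finType) (le : rel A) n : Omega le n = cnt (strictP le) n.
Proof. by []. Qed.
Lemma Omega_plus_cnt (A : finType) (le : rel A) n : Omega_plus le n = cnt (weakP le) n.
Proof. by []. Qed.

Lemma strictP_shift (A : finType) (le : rel A) (h : A -> nat) k :
  strictP le (fun x => h x + k)%N = strictP le h.
Proof.
apply: eq_forallb => u; apply: eq_forallb => v; by rewrite ltn_add2r.
Qed.
Lemma weakP_shift (A : finType) (le : rel A) (h : A -> nat) k :
  weakP le (fun x => h x + k)%N = weakP le h.
Proof.
apply: eq_forallb => u; apply: eq_forallb => v; by rewrite leq_add2r.
Qed.

Lemma cnt_low (A : finType) (Q : (A -> nat) -> bool) n k : (k <= n)%N ->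
  #|[set g : {ffun A -> 'I_n} | Q (fun x => nat_of_ord (g x)) && [forall x, (g x < k)%N]]| = cnt Q k.
Proof.
move=> Hkn.
pose F (h : {ffun A -> 'I_k}) : {ffun A -> 'I_n} := [ffun x => widen_ord Hkn (h x)].
have Finj : injective F.
  move=> h1 h2 E; apply/ffunP => x; have := congr1 (fun g : {ffun A -> 'I_n} => g x) E.
  by rewrite !ffunE => /(congr1 val) /= H; apply: val_inj.
rewrite /cnt -(card_imset _ Finj); apply: eq_card => g.
rewrite inE; apply/idP/imsetP.
- case/andP => HQ /forallP Hk.
  exists [ffun x => Ordinal (Hk x)].
    rewrite inE; congr (Q _): HQ; apply: functional_extensionality => x; by rewrite ffunE.
  by apply/ffunP => x; rewrite !ffunE; apply: val_inj.
- case=> h; rewrite inE => Hh ->; apply/andP; split.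
    congr (Q _): Hh; apply: functional_extensionality => x; by rewrite ffunE.
  by apply/forallP => x; rewrite ffunE /=.
Qed.

Lemma addk_lt n k (i : 'I_(n - k)) : (i + k < n)%N.
Proof. have := ltn_ord i; lia. Qed.

Lemma subk_lt n k (i : 'I_n) : (k <= i)%N -> (i - k < n - k)%N.
Proof. have := ltn_ord i; lia. Qed.

Lemma cnt_high (A : finType) (Q : (A -> nat) -> bool) n k :
  #|[set g : {ffun A -> 'I_n} | Q (fun x => nat_of_ord (g x)) && [forall x, (k <= g x)%N]]|
  = cnt (fun h => Q (fun x => h x + k)%N) (n - k).
Proof.
pose F (h : {ffun A -> 'I_(n - k)}) : {ffun A -> 'I_n} := [ffun x => Ordinal (addk_lt (h x))].
have Finj : injective F.
  move=> h1 h2 E; apply/ffunP => x; have := congr1 (fun g : {ffun A -> 'I_n} => g x) E.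
  rewrite !ffunE => /(congr1 val) /= H; apply: val_inj => /=; lia.
rewrite /cnt -(card_imset _ Finj); apply: eq_card => g.
rewrite inE; apply/idP/imsetP.
- case/andP => HQ /forallP Hk.
  exists [ffun x => Ordinal (subk_lt (Hk x))].
    rewrite inE; congr (Q _): HQ; apply: functional_extensionality => x; rewrite ffunE /=.
    by have := Hk x; lia.
  apply/ffunP => x; rewrite !ffunE; apply: val_inj => /=; by have := Hk x; lia.
- case=> h; rewrite inE => Hh ->; apply/andP; split.
    congr (Q _): Hh; apply: functional_extensionality => x; by rewrite ffunE.
  by apply/forallP => x; rewrite ffunE /= leq_addl.
Qed.

Section Split.
Variables (A B I : finType).
Definition lft (g : {ffun A + B -> I}) : {ffun A -> I} := [ffun a => g (inl a)].
Definition rgt (g : {ffun A + B -> I}) : {ffun B -> I} := [ffun b => g (inr b)].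
Definition join (p : {ffun A -> I} * {ffun B -> I}) : {ffun A + B -> I} :=
  [ffun x => match x with inl a => p.1 a | inr b => p.2 b end].

Lemma card_split (R : {ffun A -> I} -> {ffun B -> I} -> bool) :
  #|[set g : {ffun A + B -> I} | R (lft g) (rgt g)]| = (\sum_(g1 : {ffun A -> I}) #|[set g2 | R g1 g2]|)%N.
Proof.
rewrite -sum1_card.
have Hb : bijective join.
  exists (fun g => (lft g, rgt g)).
    by case=> g1 g2; congr (_, _); apply/ffunP => x; rewrite !ffunE.
  by move=> g; apply/ffunP; case=> x; rewrite !ffunE.
rewrite (reindex join (onW_bij _ Hb)) /=.
rewrite (eq_bigl (fun p => R p.1 p.2)); last first.
  move=> [g1 g2]; rewrite inE /=; congr R; apply/ffunP => x; by rewrite !ffunE.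
rewrite -(pair_big_dep xpredT (fun g1 g2 => R g1 g2) (fun _ _ => 1%N)) /=.
by apply: eq_bigr => g1 _; rewrite -sum1_card; apply: eq_bigl => g2; rewrite inE.
Qed.
End Split.

Definition parR (A B : finType) (leA : rel A) (leB : rel B) : rel (A + B) := fun x y =>
  match x, y with
  | inl x', inl y' => leA x' y'
  | inr x', inr y' => leB x' y'
  | _, _ => false
  end.
Definition serR (A B : finType) (leA : rel A) (leB : rel B) : rel (A + B) := fun x y =>
  match x, y with
  | inl x', inl y' => leA x' y'
  | inr x', inr y' => leB x' y'
  | inl _, inr _ => true
  | inr _, inl _ => false
  end.

Section Rels.
Variables (A B : finType) (leA : rel A) (leB : rel B).

Lemma strict_par (g : A + B -> nat) :
  strictP (parR leA leB) g = strictP leA (fun a => g (inl a)) && strictP leB (fun b => g (inr b)).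
Proof.
apply/idP/idP.
  move/forallP => H; apply/andP; split; apply/forallP => u; apply/forallP => v.
    exact: (forallP (H (inl u)) (inl v)).
  exact: (forallP (H (inr u)) (inr v)).
case/andP => /forallP H1 /forallP H2; apply/forallP => [[u|u]]; apply/forallP => [[v|v]] //=.
  exact: (forallP (H1 u) v).
exact: (forallP (H2 u) v).
Qed.

Lemma weak_par (g : A + B -> nat) :
  weakP (parR leA leB) g = weakP leA (fun a => g (inl a)) && weakP leB (fun b => g (inr b)).
Proof.
apply/idP/idP.
  move/forallP => H; apply/andP; split; apply/forallP => u; apply/forallP => v.
    exact: (forallP (H (inl u)) (inl v)).
  exact: (forallP (H (inr u)) (inr v)).
case/andP => /forallP H1 /forallP H2; apply/forallP => [[u|u]]; apply/forallP => [[v|v]] //=.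
  exact: (forallP (H1 u) v).
exact: (forallP (H2 u) v).
Qed.

Lemma strict_ser (g : A + B -> nat) :
  strictP (serR leA leB) g = [&& strictP leA (fun a => g (inl a)), strictP leB (fun b => g (inr b))
     & [forall a, forall b, (g (inl a) < g (inr b))%N]].
Proof.
apply/idP/idP.
  move/forallP => H; apply/and3P; split; apply/forallP => u; apply/forallP => v.
  - exact: (forallP (H (inl u)) (inl v)).
  - exact: (forallP (H (inr u)) (inr v)).
  - exact: (forallP (H (inl u)) (inr v)).
case/and3P => /forallP H1 /forallP H2 /forallP H3; apply/forallP => [[u|u]]; apply/forallP => [[v|v]] //=.
- exact: (forallP (H1 u) v).
- exact: (forallP (H3 u) v).
- exact: (forallP (H2 u) v).
Qed.

Lemma weak_ser (g : A + B -> nat) :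
  weakP (serR leA leB) g = [&& weakP leA (fun a => g (inl a)), weakP leB (fun b => g (inr b))
     & [forall a, forall b, (g (inl a) <= g (inr b))%N]].
Proof.
apply/idP/idP.
  move/forallP => H; apply/and3P; split; apply/forallP => u; apply/forallP => v.
  - exact: (forallP (H (inl u)) (inl v)).
  - exact: (forallP (H (inr u)) (inr v)).
  - exact: (forallP (H (inl u)) (inr v)).
case/and3P => /forallP H1 /forallP H2 /forallP H3; apply/forallP => [[u|u]]; apply/forallP => [[v|v]] //=.
- exact: (forallP (H1 u) v).
- exact: (forallP (H3 u) v).
- exact: (forallP (H2 u) v).
Qed.
End Rels.

Lemma card_andR (X Y : finType) (p : pred X) (q : pred Y) :
  (\sum_(x : X) #|[set y | p x && q y]| = #|[set x | p x]| * #|[set y | q y]|)%N.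
Proof.
rewrite -sum_nat_const [RHS]big_mkcond /=; apply: eq_bigr => x _; rewrite inE.
case: (p x) => //=; apply/eqP; rewrite cards_eq0; apply/eqP/setP => y; by rewrite !inE.
Qed.

Lemma sum_pick n k (b : bool) (F : nat -> nat) : (k <= n)%N ->
  (\sum_(m < n.+1) (if b && (k == m) then F m else 0) = if b then F k else 0)%N.
Proof.
move=> Hk; case: b => /=; last by rewrite big1.
have Hk' : (k < n.+1)%N by [].
rewrite (bigD1 (Ordinal Hk')) //= eqxx big1 ?addn0 // => m Hm.
case: eqP => // E; move: Hm; have -> : m = Ordinal Hk' by apply: val_inj; rewrite /= E.
by rewrite eqxx.
Qed.

Lemma ser_gen (A B : finType) n (PA : (A -> nat) -> bool) (PB : (B -> nat) -> bool)
  (r : nat -> nat -> bool) (K : (A -> nat) -> nat)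
  (PBsh : forall h k, PB (fun x => h x + k)%N = PB h)
  (HK : forall (g1 : {ffun A -> 'I_n}) (g2 : {ffun B -> 'I_n}),
      [forall a, forall b, r (g1 a) (g2 b)] = [forall b, (K (fun a => nat_of_ord (g1 a)) <= g2 b)%N])
  (Kb : forall g1 : {ffun A -> 'I_n}, (K (fun a => nat_of_ord (g1 a)) <= n)%N) :
  (\sum_(g1 : {ffun A -> 'I_n})
     #|[set g2 : {ffun B -> 'I_n} | [&& PA (fun a => nat_of_ord (g1 a)), PB (fun b => nat_of_ord (g2 b))
                                    & [forall a, forall b, r (g1 a) (g2 b)]]]|
  = \sum_(m < n.+1) #|[set g1 : {ffun A -> 'I_n} | PA (fun a => nat_of_ord (g1 a)) && (K (fun a => nat_of_ord (g1 a)) == m)]|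
       * cnt PB (n - m))%N.
Proof.
have PBe : forall k, (fun h => PB (fun x => h x + k)%N) = PB.
  by move=> k; apply: functional_extensionality => h; apply: PBsh.
transitivity (\sum_(g1 : {ffun A -> 'I_n}) if PA (fun a => nat_of_ord (g1 a))
                then cnt PB (n - K (fun a => nat_of_ord (g1 a))) else 0)%N.
  apply: eq_bigr => g1 _; case: (PA _) => /=; last first.
    apply/eqP; rewrite cards_eq0; apply/eqP/setP => y; by rewrite !inE.
  rewrite -[in RHS](PBe (K (fun a => nat_of_ord (g1 a)))) -cnt_high; apply: eq_card => g2.
  by rewrite !inE HK.
rewrite (eq_bigr (fun m : 'I_n.+1 => \sum_(g1 : {ffun A -> 'I_n})
   (if PA (fun a => nat_of_ord (g1 a)) && (K (fun a => nat_of_ord (g1 a)) == m) then cnt PB (n - m) else 0)))%N; last first.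
  move=> m _; rewrite -sum_nat_const big_mkcond /=; apply: eq_bigr => g1 _; by rewrite inE.
rewrite exchange_big /=; apply: eq_bigr => g1 _.
by rewrite (sum_pick _ (fun m => cnt PB (n - m))).
Qed.

Definition Ks (A : finType) (g : A -> nat) : nat := \max_(a : A) (g a).+1.
Definition Kw (A : finType) (g : A -> nat) : nat := \max_(a : A) g a.

Lemma Ks_le (A : finType) (g : A -> nat) m : (Ks g <= m) = [forall a, g a < m].
Proof. by apply/bigmax_leqP/forallP => H a; [apply: H | move=> _; apply: H]. Qed.
Lemma Kw_le (A : finType) (g : A -> nat) m : (Kw g <= m) = [forall a, g a <= m].
Proof. by apply/bigmax_leqP/forallP => H a; [apply: H | move=> _; apply: H]. Qed.

Lemma card_key (X : finType) (P : pred X) (K : X -> nat) m :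
  (#|[set x | P x && (K x == m)]| + #|[set x | P x && (K x < m)]| = #|[set x | P x && (K x <= m)]|)%N.
Proof.
rewrite -(cardsID [set x | K x == m] [set x | P x && (K x <= m)]); congr (_ + _); apply: eq_card => x;
  rewrite !inE; case: (P x) => //=; case: ltngtP => //.
Qed.

Section Ser.
Variables (A B : finType) (leA : rel A) (leB : rel B).

Lemma Omega_ser n : Omega (serR leA leB) n =
  (\sum_(m < n.+1) #|[set g1 : {ffun A -> 'I_n} | strictP leA (fun a => nat_of_ord (g1 a)) && (Ks (fun a => nat_of_ord (g1 a)) == m)]|
       * Omega leB (n - m))%N.
Proof.
rewrite Omega_cnt /cnt.
pose R := fun (g1 : {ffun A -> 'I_n}) (g2 : {ffun B -> 'I_n}) => [&& strictP leA (fun a => nat_of_ord (g1 a)), strictP leB (fun b => nat_of_ord (g2 b))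
     & [forall a, forall b, (g1 a < g2 b)%N]].
rewrite (eq_card (B := [set G : {ffun A + B -> 'I_n} | R (lft G) (rgt G)])); last first.
  move=> G; rewrite !inE /R strict_ser /lft /rgt.
  congr [&& _, _ & _].
  - by congr strictP; apply: functional_extensionality => a; rewrite ffunE.
  - by congr strictP; apply: functional_extensionality => a; rewrite ffunE.
  - by apply: eq_forallb => a; apply: eq_forallb => b; rewrite !ffunE.
rewrite card_split.
apply: (@ser_gen A B n (strictP leA) (strictP leB) (fun x y => x < y)%N (@Ks A)).
- by move=> h k; apply: strictP_shift.
- move=> g1 g2; apply/forallP/forallP => H b.
    rewrite Ks_le; apply/forallP => a; exact: (forallP (H a) b).
  apply/forallP => a; have := H a; rewrite Ks_le => /forallP; exact.
- move=> g1; rewrite Ks_le; apply/forallP => a; exact: ltn_ord.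
Qed.

Lemma Omega_plus_ser n : Omega_plus (serR leA leB) n =
  (\sum_(m < n.+1) #|[set g1 : {ffun A -> 'I_n} | weakP leA (fun a => nat_of_ord (g1 a)) && (Kw (fun a => nat_of_ord (g1 a)) == m)]|
       * Omega_plus leB (n - m))%N.
Proof.
rewrite Omega_plus_cnt /cnt.
pose R := fun (g1 : {ffun A -> 'I_n}) (g2 : {ffun B -> 'I_n}) => [&& weakP leA (fun a => nat_of_ord (g1 a)), weakP leB (fun b => nat_of_ord (g2 b))
     & [forall a, forall b, (g1 a <= g2 b)%N]].
rewrite (eq_card (B := [set G : {ffun A + B -> 'I_n} | R (lft G) (rgt G)])); last first.
  move=> G; rewrite !inE /R weak_ser /lft /rgt.
  congr [&& _, _ & _].
  - by congr weakP; apply: functional_extensionality => a; rewrite ffunE.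
  - by congr weakP; apply: functional_extensionality => a; rewrite ffunE.
  - by apply: eq_forallb => a; apply: eq_forallb => b; rewrite !ffunE.
rewrite card_split.
apply: (@ser_gen A B n (weakP leA) (weakP leB) (fun x y => x <= y)%N (@Kw A)).
- by move=> h k; apply: weakP_shift.
- move=> g1 g2; apply/forallP/forallP => H b.
    rewrite Kw_le; apply/forallP => a; exact: (forallP (H a) b).
  apply/forallP => a; have := H a; rewrite Kw_le => /forallP; exact.
- move=> g1; rewrite Kw_le; apply/forallP => a; exact: ltnW.
Qed.

Lemma Omega_par n : Omega (parR leA leB) n = (Omega leA n * Omega leB n)%N.
Proof.
rewrite !Omega_cnt /cnt.
pose R := fun (g1 : {ffun A -> 'I_n}) (g2 : {ffun B -> 'I_n}) => strictP leA (fun a => nat_of_ord (g1 a)) && strictP leB (fun b => nat_of_ord (g2 b)).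
rewrite (eq_card (B := [set G : {ffun A + B -> 'I_n} | R (lft G) (rgt G)])); last first.
  move=> G; rewrite !inE /R strict_par /lft /rgt.
  by congr (_ && _); congr strictP; apply: functional_extensionality => a; rewrite ffunE.
by rewrite card_split card_andR.
Qed.

Lemma Omega_plus_par n : Omega_plus (parR leA leB) n = (Omega_plus leA n * Omega_plus leB n)%N.
Proof.
rewrite !Omega_plus_cnt /cnt.
pose R := fun (g1 : {ffun A -> 'I_n}) (g2 : {ffun B -> 'I_n}) => weakP leA (fun a => nat_of_ord (g1 a)) && weakP leB (fun b => nat_of_ord (g2 b)).
rewrite (eq_card (B := [set G : {ffun A + B -> 'I_n} | R (lft G) (rgt G)])); last first.
  move=> G; rewrite !inE /R weak_par /lft /rgt.
  by congr (_ && _); congr weakP; apply: functional_extensionality => a; rewrite ffunE.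
by rewrite card_split card_andR.
Qed.

Lemma strict_key n m : (m <= n)%N ->
  #|[set g1 : {ffun A -> 'I_n} | strictP leA (fun a => nat_of_ord (g1 a)) && (Ks (fun a => nat_of_ord (g1 a)) <= m)]|
  = Omega leA m.
Proof.
move=> Hm; rewrite Omega_cnt -(cnt_low _ Hm); apply: eq_card => g; by rewrite !inE Ks_le.
Qed.

Lemma weak_key n m : (m < n)%N ->
  #|[set g1 : {ffun A -> 'I_n} | weakP leA (fun a => nat_of_ord (g1 a)) && (Kw (fun a => nat_of_ord (g1 a)) <= m)]|
  = Omega_plus leA m.+1.
Proof.
move=> Hm; rewrite Omega_plus_cnt -(cnt_low _ Hm); apply: eq_card => g; rewrite !inE Kw_le.
by congr (_ && _); apply: eq_forallb => a; rewrite ltnS.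
Qed.

Lemma strict_eq n m : (m <= n)%N ->
  (#|[set g1 : {ffun A -> 'I_n} | strictP leA (fun a => nat_of_ord (g1 a)) && (Ks (fun a => nat_of_ord (g1 a)) == m)]|
   + (if m is m'.+1 then Omega leA m' else 0) = Omega leA m)%N.
Proof.
move=> Hm; rewrite -(strict_key Hm) -card_key; congr (_ + _).
case: m Hm => [|m] Hm.
  apply/esym/eqP; rewrite cards_eq0; apply/eqP/setP => g; by rewrite !inE ltn0 andbF.
rewrite -(strict_key (ltnW Hm)); apply: eq_card => g; by rewrite !inE.
Qed.

Lemma weak_eq n m : (m < n)%N ->
  (#|[set g1 : {ffun A -> 'I_n} | weakP leA (fun a => nat_of_ord (g1 a)) && (Kw (fun a => nat_of_ord (g1 a)) == m)]|
   + (if m is m'.+1 then Omega_plus leA m else 0) = Omega_plus leA m.+1)%N.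
Proof.
move=> Hm; rewrite -(weak_key Hm) -card_key; congr (_ + _).
case: m Hm => [|m] Hm.
  apply/esym/eqP; rewrite cards_eq0; apply/eqP/setP => g; by rewrite !inE ltn0 andbF.
rewrite -(weak_key (ltnW Hm)); apply: eq_card => g; by rewrite !inE.
Qed.
End Ser.

Lemma binG j : forall n i, \sum_(m < n) 'C(m, i) * 'C(n.-1 - m, j) = 'C(n, i + j + 1).
Proof.
elim: j => [|j IHj] n i.
  rewrite (eq_bigr (fun m : 'I_n => 'C(m, i))); last by move=> m _; rewrite bin0 muln1.
  rewrite addn0 addn1; elim: n => [|n IHn]; first by rewrite big_ord0 bin0n.
  by rewrite big_ord_recr /= IHn binS addnC.
elim: n => [|n IHn]; first by rewrite big_ord0 bin0n addn1.
rewrite big_ord_recr /= subnn bin0n muln0 addn0.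
rewrite (eq_bigr (fun m : 'I_n => 'C(m, i) * 'C(n.-1 - m, j.+1) + 'C(m, i) * 'C(n.-1 - m, j))); last first.
  move=> m _; have -> : n - m = (n.-1 - m).+1 by have := ltn_ord m; lia.
  by rewrite binS mulnDr.
rewrite big_split /= IHn IHj.
have -> : i + j.+1 + 1 = (i + j + 1).+1 by lia.
by rewrite binS.
Qed.

Lemma binGw j : forall n i, \sum_(m < n.+1) 'C(m + i, i) * 'C(n - m + j, j) = 'C(n + i + j + 1, i + j + 1).
Proof.
elim: j => [|j IHj] n i.
  elim: n => [|n IHn]; first by rewrite big_ord1 /= !add0n addn0 !binn.
  rewrite big_ord_recr /= subnn add0n bin0 muln1.
  rewrite (eq_bigr (fun m : 'I_n.+1 => 'C(m + i, i) * 'C(n - m + 0, 0))); last by move=> m _; rewrite !bin0.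
  rewrite IHn !addn0.
  have -> : n.+1 + i + 1 = (n + i + 1).+1 by lia.
  have -> : n.+1 + i = n + i + 1 by lia.
  by rewrite !addn1 [RHS]binS.
elim: n => [|n IHn]; first by rewrite big_ord1 /= !add0n !binn.
rewrite (eq_bigr (fun m : 'I_n.+2 => 'C(m + i, i) * 'C(n.+1 - m + j, j.+1) + 'C(m + i, i) * 'C(n.+1 - m + j, j))); last first.
  by move=> m _; rewrite addnS binS mulnDr.
rewrite big_split /= IHj.
rewrite big_ord_recr /= subnn add0n (bin_small (ltnSn j)) muln0 addn0.
rewrite (eq_bigr (fun m : 'I_n.+1 => 'C(m + i, i) * 'C(n - m + j.+1, j.+1))); last first.
  by move=> m _; have -> : n.+1 - m + j = n - m + j.+1 by have := ltn_ord m; lia.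
rewrite IHn.
have -> : n.+1 + i + j + 1 = (n + i + j.+1).+1 by lia.
have -> : n + i + j.+1 + 1 = (n + i + j.+1).+1 by lia.
have -> : i + j.+1 + 1 = (i + j + 1).+1 by lia.
have -> : n.+1 + i + j.+1 + 1 = (n + i + j.+1).+2 by lia.
by rewrite [RHS]binS.
Qed.

Lemma binH n i j : \sum_(m < n.+1) 'C(m + i, i) * 'C(n - m + j, j.+1) = 'C(n + i + j + 1, i + j + 2).
Proof.
case: n => [|n]; first by rewrite big_ord1 /= add0n (bin_small (ltnSn j)) muln0 bin_small //; lia.
rewrite big_ord_recr /= subnn add0n (bin_small (ltnSn j)) muln0 addn0.
rewrite (eq_bigr (fun m : 'I_n.+1 => 'C(m + i, i) * 'C(n - m + j.+1, j.+1))); last first.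
  by move=> m _; have -> : n.+1 - m + j = n - m + j.+1 by have := ltn_ord m; lia.
rewrite binGw.
by congr binomial; lia.
Qed.

Local Open Scope ring_scope.

Lemma altsum M j : \sum_(k < j.+1) (-1) ^+ k * ('C(M.+1, k))%:R = (-1) ^+ j * ('C(M, j))%:R :> rat.
Proof.
elim: j => [|j IHj]; first by rewrite big_ord1 /= !bin0 !expr0.
rewrite big_ord_recr /= IHj binS natrD exprS.
have -> : (-1) ^+ j * ('C(M, j))%:R + - 1 * (-1) ^+ j * (('C(M, j.+1))%:R + ('C(M, j))%:R)
  = - 1 * (-1) ^+ j * ('C(M, j.+1))%:R :> rat by ring.
by [].
Qed.

Lemma altG M i : (i < M)%N -> forall j,
  \sum_(k < j.+1) (-1) ^+ k * ('C(M, k))%:R * ('C(j - k + i, i))%:R = (-1) ^+ j * ('C(M.-1 - i, j))%:R :> rat.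
Proof.
case: M => [//|M].
elim: i => [|i IHi] HiM j.
  rewrite (eq_bigr (fun k : 'I_j.+1 => (-1) ^+ k * ('C(M.+1, k))%:R)); last by move=> k _; rewrite addn0 bin0 mulr1.
  by rewrite altsum subn0.
elim: j => [|j IHj]; first by rewrite big_ord1 /= !bin0 !binn expr0 !mul1r.
rewrite (eq_bigr (fun k : 'I_j.+2 => (-1) ^+ k * ('C(M.+1, k))%:R * ('C(j.+1 - k + i, i.+1))%:R
   + (-1) ^+ k * ('C(M.+1, k))%:R * ('C(j.+1 - k + i, i))%:R)); last first.
  by move=> k _; rewrite addnS binS natrD mulrDr.
rewrite big_split /= IHi; last by lia.
rewrite big_ord_recr /= subnn add0n (bin_small (ltnSn i)) mulr0 addr0.
rewrite (eq_bigr (fun k : 'I_j.+1 => (-1) ^+ k * ('C(M.+1, k))%:R * ('C(j - k + i.+1, i.+1))%:R)); last first.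
  by move=> k _; have -> : (j.+1 - k + i = j - k + i.+1)%N by have := ltn_ord k; lia.
rewrite IHj /=.
have -> : (M - i = (M - i.+1).+1)%N by lia.
rewrite binS natrD exprS; ring.
Qed.

Local Open Scope ring_scope.

Definition PX (k : nat) : {poly rat} := \prod_(i < k) ('X - (i%:R)%:P).
Definition Bp (k : nat) : {poly rat} := (k`!%:R)^-1 *: PX k.

Lemma PX_nat k n : (PX k).[n%:R] = (n ^_ k)%:R.
Proof.
rewrite /PX horner_prod; elim: k => [|k IHk]; first by rewrite big_ord0 ffactn0.
rewrite big_ord_recr /= IHk ffactnSr !hornerE.
case: (leqP k n) => Hk; first by rewrite natrM natrB.
by rewrite ffact_small // mul0r.
Qed.

Lemma PX_neg k n : (PX k).[- n%:R] = (-1) ^+ k * (((n + k)%N.-1) ^_ k)%:R.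
Proof.
rewrite /PX horner_prod; elim: k => [|k IHk]; first by rewrite big_ord0 ffactn0 expr0 mulr1.
rewrite big_ord_recr /= IHk !hornerE.
case E: (n + k)%N => [|m].
  have -> : n = 0%N by lia. have -> : k = 0%N by lia.
  by rewrite /= ffactn1 oppr0 subr0 !mulr0.
have -> : ((n + k.+1)%N.-1 = m.+1)%N by lia.
rewrite ffactSS natrM exprS /=.
have -> : (m.+1%:R : rat) = n%:R + k%:R by rewrite -natrD E.
ring.
Qed.

Lemma fact_neq0 k : (k`!%:R : rat) != 0.
Proof. by rewrite pnatr_eq0 -lt0n fact_gt0. Qed.

Lemma Bp_nat k n : (Bp k).[n%:R] = ('C(n, k))%:R.
Proof.
rewrite /Bp hornerZ PX_nat -bin_ffact natrM mulrC mulrK //; exact: fact_neq0.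
Qed.

Lemma Bp_neg k n : (Bp k).[- n%:R] = (-1) ^+ k * ('C((n + k)%N.-1, k))%:R.
Proof.
rewrite /Bp hornerZ PX_neg -bin_ffact natrM.
have := fact_neq0 k; move: (k`!%:R : rat) => f Hf.
by field.
Qed.

Lemma PX_monic k : PX k \is monic.
Proof. by rewrite /PX; apply: monic_prod => i _; apply: monicXsubC. Qed.

Lemma size_PX k : size (PX k) = k.+1.
Proof.
rewrite /PX; elim: k => [|k IHk]; first by rewrite big_ord0 size_poly1.
rewrite big_ord_recr /= size_Mmonic ?monicXsubC ?size_XsubC ?IHk //; last by rewrite -size_poly_eq0 IHk.
by rewrite addn2.
Qed.

Lemma size_Bp k : size (Bp k) = k.+1.
Proof. by rewrite /Bp size_scale ?size_PX // invr_eq0 fact_neq0. Qed.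

Lemma Bp_lead k : (Bp k)`_k = (k`!%:R)^-1.
Proof.
rewrite /Bp coefZ.
have := PX_monic k; rewrite monicE /lead_coef size_PX /= => /eqP ->.
by rewrite mulr1.
Qed.

Lemma Bp_basis_aux s : forall p : {poly rat}, (size p <= s)%N ->
  exists a : nat -> rat, (forall i, (s <= i)%N -> a i = 0) /\ p = \sum_(i < s) a i *: Bp i.
Proof.
elim: s => [|s IHs] p Hp.
  exists (fun _ => 0); split => // ; rewrite big_ord0; apply/eqP; by rewrite -size_poly_eq0 -leqn0.
pose q := p - (p`_s * s`!%:R) *: Bp s.
have Hq : (size q <= s)%N.
  apply/leq_sizeP => j Hj; rewrite /q coefB coefZ.
  case: (ltngtP s j) => Hsj.
  - have /leq_sizeP H1 := Hp; rewrite (H1 j) //.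
    have /leq_sizeP H2 : (size (Bp s) <= s.+1)%N by rewrite size_Bp.
    by rewrite (H2 j) // mulr0 subr0.
  - by have := leq_ltn_trans Hj Hsj; rewrite ltnn.
  - rewrite -Hsj Bp_lead -mulrA mulfV ?fact_neq0 // mulr1 subrr //.
have [a [Ha Hqa]] := IHs q Hq.
exists (fun i => if i == s then p`_s * s`!%:R else a i); split.
  move=> i Hi; have -> : (i == s) = false by apply/negbTE; rewrite neq_ltn Hi orbT.
  by apply: Ha; apply: ltnW.
rewrite big_ord_recr /= eqxx.
rewrite (eq_bigr (fun i : 'I_s => a i *: Bp i)); last first.
  by move=> i _; have -> : (i == s :> nat) = false by apply/negbTE; rewrite neq_ltn ltn_ord.
by rewrite -Hqa /q subrK.
Qed.

Lemma Bp_basis (p : {poly rat}) : exists a : nat -> rat, p = \sum_(i < size p) a i *: Bp i.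
Proof. by have [a [_ H]] := Bp_basis_aux (leqnn (size p)); exists a. Qed.

Lemma Bp0 k : (Bp k).[0] = (k == 0%N)%:R.
Proof. by have := Bp_nat k 0; rewrite bin0n. Qed.

Local Open Scope ring_scope.

Definition good (A : finType) (le : rel A) : Prop :=
  exists P : {poly rat}, P.[0] = 0 /\ (forall n, (Omega le n)%:R = P.[n%:R])
    /\ (forall n, (Omega_plus le n)%:R = (-1) ^+ #|A| * P.[- n%:R]).

Lemma good_iso (T C : finType) (le : rel T) (leC : rel C) (f : T -> C) :
  bijective f -> (forall x y, le x y = leC (f x) (f y)) -> good leC -> good le.
Proof.
move=> Hf Hle [P [H0 [H1 H2]]]; exists P; split => //.
have [f' fK f'K] := Hf.
have ST : forall h : C -> nat, strictP le (fun x => h (f x)) = strictP leC h.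
  move=> h; apply/forallP/forallP => H u.
    apply/forallP => v; have := forallP (H (f' u)) (f' v).
    by rewrite Hle !f'K (can_eq f'K).
  apply/forallP => v; have := forallP (H (f u)) (f v).
  by rewrite -Hle (can_eq fK).
have WT : forall h : C -> nat, weakP le (fun x => h (f x)) = weakP leC h.
  move=> h; apply/forallP/forallP => H u.
    apply/forallP => v; have := forallP (H (f' u)) (f' v).
    by rewrite Hle !f'K.
  apply/forallP => v; have := forallP (H (f u)) (f v).
  by rewrite -Hle.
have Hc : forall n (Q : (T -> nat) -> bool) (QC : (C -> nat) -> bool),
    (forall h : C -> nat, Q (fun x => h (f x)) = QC h) -> cnt Q n = cnt QC n.
  move=> n Q QC HQ; rewrite /cnt.
  pose Phi (h : {ffun C -> 'I_n}) : {ffun T -> 'I_n} := [ffun x => h (f x)].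
  have Pinj : injective Phi.
    move=> h1 h2 E; apply/ffunP => y; have := congr1 (fun g : {ffun T -> 'I_n} => g (f' y)) E.
    by rewrite !ffunE f'K.
  rewrite -(card_imset _ Pinj); apply: eq_card => g; rewrite inE; apply/idP/imsetP.
    move=> Hg; exists [ffun y => g (f' y)].
      rewrite inE -HQ; congr (Q _): Hg; apply: functional_extensionality => x; by rewrite ffunE fK.
    by apply/ffunP => x; rewrite !ffunE fK.
  case=> h; rewrite inE => Hh ->; rewrite -HQ in Hh; congr (Q _): Hh.
  by apply: functional_extensionality => x; rewrite ffunE.
split => n.
  by rewrite Omega_cnt (Hc n _ (strictP leC)) // -Omega_cnt H1.
by rewrite Omega_plus_cnt (Hc n _ (weakP leC)) // -Omega_plus_cnt H2 (bij_eq_card Hf).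
Qed.

Lemma good_one : good (@sp_le SP_one).
Proof.
have Hc : forall n (Q : (unit -> nat) -> bool), (forall g, Q g) -> cnt Q n = n.
  move=> n Q HQ; rewrite /cnt (eq_card (B := [set: {ffun unit -> 'I_n}])).
    by rewrite cardsT card_ffun card_ord card_unit expn1.
  by move=> g; rewrite !inE HQ.
exists 'X; split; first by rewrite hornerX.
split => n.
  rewrite Omega_cnt Hc ?hornerX // => g; apply/forallP => u; apply/forallP => v.
  by case: u; case: v.
rewrite Omega_plus_cnt Hc; last first.
  by move=> g; apply/forallP => u; apply/forallP => v; case: u; case: v => /=; rewrite leqnn.
by rewrite hornerX /= card_unit expr1 mulN1r opprK.
Qed.

Lemma good_par (A B : finType) (leA : rel A) (leB : rel B) :
  good leA -> good leB -> good (parR leA leB).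
Proof.
move=> [P [P0 [P1 P2]]] [Q [Q0 [Q1 Q2]]]; exists (P * Q); split.
  by rewrite hornerM P0 mul0r.
split => n.
  by rewrite Omega_par natrM P1 Q1 hornerM.
rewrite Omega_plus_par natrM P2 Q2 hornerM card_sum exprD; ring.
Qed.

Local Open Scope ring_scope.

Lemma ID1 n i j : \sum_(m < n.+1) (('C(m, i.+1))%:R - ('C(m.-1, i.+1))%:R) * ('C((n - m)%N, j))%:R
  = ('C(n, (i.+1 + j)%N))%:R :> rat.
Proof.
rewrite big_ord_recl /= subrr mul0r add0r.
rewrite (eq_bigr (fun m : 'I_n => (('C(m, i) * 'C(n.-1 - m, j))%N)%:R)); last first.
  move=> m _; rewrite /bump /= add1n add0n binS natrD addrAC subrr add0r natrM; congr (_ * _%:R).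
  by congr binomial; have := ltn_ord m; lia.
rewrite -natr_sum binG; congr (_%:R); congr binomial; lia.
Qed.

Lemma ID2 n i j :
  \sum_(m < n.+1) (('C((m.+1 + i.+1).-1, i.+1))%:R - ('C((m + i.+1).-1, i.+1))%:R)
      * ('C((n - m + j.+1).-1, j.+1))%:R
  = ('C((n + (i.+1 + j.+1)).-1, (i.+1 + j.+1)%N))%:R :> rat.
Proof.
rewrite (eq_bigr (fun m : 'I_n.+1 => (('C(m + i, i) * 'C(n - m + j, j.+1))%N)%:R)); last first.
  move=> m _.
  have -> : ((m.+1 + i.+1).-1 = (m + i).+1)%N by lia.
  have -> : ((m + i.+1).-1 = m + i)%N by lia.
  have -> : ((n - m + j.+1).-1 = n - m + j)%N by lia.
  by rewrite binS natrD addrAC subrr add0r natrM.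
rewrite -natr_sum binH; congr (_%:R); congr binomial; lia.
Qed.

Lemma sum3 n KA KB (a b : nat -> rat) (FA FB : nat -> nat -> rat) :
  \sum_(m < n.+1) (\sum_(i < KA) a i * FA m i) * (\sum_(j < KB) b j * FB m j)
  = \sum_(i < KA) \sum_(j < KB) a i * b j * \sum_(m < n.+1) FA m i * FB m j.
Proof.
rewrite (eq_bigr (fun m : 'I_n.+1 => \sum_(i < KA) \sum_(j < KB) a i * b j * (FA m i * FB m j))); last first.
  move=> m _; rewrite mulr_suml; apply: eq_bigr => i _; rewrite mulr_sumr; apply: eq_bigr => j _; ring.
rewrite exchange_big /=; apply: eq_bigr => i _.
rewrite exchange_big /=; apply: eq_bigr => j _.
by rewrite mulr_sumr.
Qed.

Local Open Scope ring_scope.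

Lemma basis_eval (P : {poly rat}) : exists a : nat -> rat,
  (forall x, P.[x] = \sum_(i < size P) a i * (Bp i).[x]) /\
  (P.[0] = 0 -> forall i : 'I_(size P), (i : nat) = 0%N -> a i = 0).
Proof.
have [a Ha] := Bp_basis P.
have ev : forall x, P.[x] = \sum_(i < size P) a i * (Bp i).[x].
  by move=> x; rewrite {1}Ha horner_sum; apply: eq_bigr => i _; rewrite hornerZ.
exists a; split => // P0 i Hi.
move: P0; rewrite ev (bigD1 i) //= Bp0 Hi /= mulr1 big1 ?addr0 // => j Hj.
rewrite Bp0; have -> : (j == 0%N :> nat) = false; last by rewrite mulr0.
apply/negbTE; apply: contra Hj => /eqP Hj0; apply/eqP; apply: val_inj; by rewrite /= Hj0 Hi.
Qed.

Lemma good_ser (A B : finType) (leA : rel A) (leB : rel B) :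
  good leA -> good leB -> good (serR leA leB).
Proof.
move=> [PA [A0 [A1 A2]]] [PB [B0 [B1 B2]]].
have [a [evA a0']] := basis_eval PA; have [b [evB b0']] := basis_eval PB.
have a0 := a0' A0; have b0 := b0' B0; clear a0' b0'.
move: (size PA) (size PB) a b evA evB a0 b0 => KA KB a b evA evB a0 b0.
pose R := \sum_(i < KA) \sum_(j < KB) (a i * b j) *: Bp (i + j)%N.
have evR : forall x, R.[x] = \sum_(i < KA) \sum_(j < KB) a i * b j * (Bp (i + j)%N).[x].
  move=> x; rewrite /R horner_sum; apply: eq_bigr => i _.
  rewrite horner_sum; apply: eq_bigr => j _; by rewrite hornerZ.
have OA0 : (Omega leA 0)%:R = 0 :> rat by rewrite A1.
have OPA0 : (Omega_plus leA 0)%:R = 0 :> rat by rewrite A2 oppr0 A0 mulr0.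
have OPB0 : (Omega_plus leB 0)%:R = 0 :> rat by rewrite B2 oppr0 B0 mulr0.
exists R; split.
  rewrite evR big1 // => i _; rewrite big1 // => j _.
  case: (eqVneq (i : nat) 0%N) => Hi; first by rewrite a0 // !mul0r.
  by rewrite Bp0 addn_eq0 (negbTE Hi) mulr0.
split => n.
- rewrite Omega_ser natr_sum.
  transitivity (\sum_(m < n.+1) ((Omega leA m)%:R - (Omega leA m.-1)%:R) * (Omega leB (n - m))%:R : rat).
    apply: eq_bigr => m _; rewrite natrM; congr (_ * _).
    move: (nat_of_ord m) (ltn_ord m) => k Hk.
    have := @strict_eq _ leA n k Hk; case: k {Hk} => [|m'] /=.
      by rewrite addn0 => ->; rewrite OA0 subrr.
    move/(congr1 (fun x => x%:R : rat)); rewrite natrD => <-; ring.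
  rewrite (eq_bigr (fun m : 'I_n.+1 =>
     (\sum_(i < KA) a i * (('C(m, i))%:R - ('C(m.-1, i))%:R)) *
     (\sum_(j < KB) b j * ('C((n - m)%N, j))%:R))); last first.
    move=> m _; rewrite A1 A1 B1 !evA evB -sumrB; congr (_ * _).
      by apply: eq_bigr => i _; rewrite !Bp_nat mulrBr.
    by apply: eq_bigr => j _; rewrite Bp_nat.
  rewrite (sum3 n KA KB a b (fun m i => ('C(m, i))%:R - ('C(m.-1, i))%:R) (fun m j => ('C((n - m)%N, j))%:R)) evR; apply: eq_bigr => i _; apply: eq_bigr => j _.
  case: (eqVneq (i : nat) 0%N) => Hi; first by rewrite a0 // !mul0r.
  rewrite Bp_nat; case: (nat_of_ord i) Hi => [//|i'] _; by rewrite ID1.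
- rewrite Omega_plus_ser natr_sum.
  transitivity (\sum_(m < n.+1) ((Omega_plus leA m.+1)%:R - (Omega_plus leA m)%:R) * (Omega_plus leB (n - m))%:R : rat).
    apply: eq_bigr => m _; rewrite natrM.
    case: (ltnP m n) => Hmn; last first.
      have -> : (n - m = 0)%N by have := ltn_ord m; lia.
      by rewrite OPB0 !mulr0.
    congr (_ * _).
    move: (nat_of_ord m) Hmn => k Hk.
    have := @weak_eq _ leA n k Hk; case: k {Hk} => [|m'] /=.
      by rewrite addn0 => ->; rewrite OPA0 subr0.
    move/(congr1 (fun x => x%:R : rat)); rewrite natrD => <-; ring.
  rewrite (eq_bigr (fun m : 'I_n.+1 => (-1) ^+ #|A| * (-1) ^+ #|B| *
     ((\sum_(i < KA) a i * ((-1) ^+ i * (('C((m.+1 + i).-1, i))%:R - ('C((m + i).-1, i))%:R))) *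
     (\sum_(j < KB) b j * ((-1) ^+ j * ('C((n - m + j).-1, j))%:R))))); last first.
    move=> m _; rewrite A2 A2 B2 !evA evB.
    rewrite -mulrBr.
    have -> : \sum_(i < KA) a i * (Bp i).[- m.+1%:R] - \sum_(i < KA) a i * (Bp i).[- m%:R]
      = \sum_(i < KA) a i * ((-1) ^+ i * (('C((m.+1 + i).-1, i))%:R - ('C((m + i).-1, i))%:R)).
      rewrite -sumrB; apply: eq_bigr => i _; rewrite !Bp_neg; ring.
    have -> : \sum_(j < KB) b j * (Bp j).[- (n - m)%:R]
      = \sum_(j < KB) b j * ((-1) ^+ j * ('C((n - m + j).-1, j))%:R).
      by apply: eq_bigr => j _; rewrite Bp_neg.
    ring.
  rewrite -mulr_sumr.
  rewrite (sum3 n KA KB a b (fun m i => (-1) ^+ i * (('C((m.+1 + i).-1, i))%:R - ('C((m + i).-1, i))%:R))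
     (fun m j => (-1) ^+ j * ('C((n - m + j).-1, j))%:R)).
  rewrite card_sum exprD; congr (_ * _).
  rewrite evR; apply: eq_bigr => i _; apply: eq_bigr => j _.
  case: (eqVneq (i : nat) 0%N) => Hi; first by rewrite a0 // !mul0r.
  case: (eqVneq (j : nat) 0%N) => Hj; first by rewrite b0 // !mulr0 !mul0r.
  rewrite Bp_neg.
  move: (nat_of_ord i) (nat_of_ord j) Hi Hj => [//|i'] [//|j'] _ _.
  rewrite (eq_bigr (fun m : 'I_n.+1 => (-1) ^+ i'.+1 * (-1) ^+ j'.+1 *
     ((('C((m.+1 + i'.+1).-1, i'.+1))%:R - ('C((m + i'.+1).-1, i'.+1))%:R)
      * ('C((n - m + j'.+1).-1, j'.+1))%:R))); last by move=> m _; ring.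
  by rewrite -mulr_sumr ID2 exprD; ring.
Qed.

Local Open Scope ring_scope.

Lemma good_sp (t : sp_term) : good (@sp_le t).
Proof.
elim: t => [|a IHa b IHb|a IHa b IHb]; first exact: good_one.
  exact: (good_ser IHa IHb).
exact: (good_par IHa IHb).
Qed.

Lemma card_sp_gt0 (t : sp_term) : (0 < #|sp_car t|)%N.
Proof.
elim: t => [|a IHa b IHb|a IHa b IHb] /=; first by rewrite card_unit.
  by rewrite card_sum addn_gt0 IHa.
by rewrite card_sum addn_gt0 IHa.
Qed.

Lemma coef_1subX M k : ((1 - 'X) ^+ M : {poly rat})`_k = (-1) ^+ k * ('C(M, k))%:R.
Proof.
elim: M k => [|M IHM] k.
  by rewrite expr0 coef1 bin0n; case: k => [|k] //=; rewrite mulr0.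
rewrite exprS mulrBl mul1r coefB coefXM.
case: k => [|k] /=; first by rewrite subr0 IHM !bin0.
by rewrite !IHM binS natrD exprS; ring.
Qed.

Lemma hstar_ext (T : finType) (le : rel T) (c : nat -> rat)
  (Hplus : forall n, Zplus_coef le n.+1 =
     \sum_(1 <= i < #|T|.+1) c i * ((-1) ^+ (#|T| + i) * ('C((n + i)%N, i))%:R)) j :
  hstar le j = \sum_(1 <= i < #|T|.+1) c i * ((-1) ^+ (#|T| + i) * ((-1) ^+ j * ('C((#|T| - i)%N, j))%:R)).
Proof.
rewrite /hstar big_ord_recr /= subnn mulr0 addr0.
rewrite (eq_bigr (fun k : 'I_j.+1 => \sum_(1 <= i < #|T|.+1)
   (-1) ^+ k * ('C(#|T|.+1, k))%:R * (c i * ((-1) ^+ (#|T| + i) * ('C((j - k + i)%N, i))%:R)))); last first.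
  move=> k _; rewrite coef_1subX.
  have -> : (j.+1 - k = (j - k).+1)%N by have := ltn_ord k; lia.
  by rewrite Hplus mulr_sumr.
rewrite exchange_big /=; apply: eq_big_nat => i /andP [Hi1 Hi2].
rewrite (eq_bigr (fun k : 'I_j.+1 => c i * (-1) ^+ (#|T| + i) *
   ((-1) ^+ k * ('C(#|T|.+1, k))%:R * ('C((j - k + i)%N, i))%:R))); last by move=> k _; ring.
rewrite -mulr_sumr altG //= -mulrA.
by [].
Qed.

Local Open Scope ring_scope.

Lemma sign_sub N i : (i <= N)%N -> (-1) ^+ (N + i) = (-1) ^+ (N - i) :> rat.
Proof.
move=> H; have -> : (N + i = (N - i) + i.*2)%N by rewrite -addnn; lia.
by rewrite exprD -mul2n exprM expr2 mulrNN mulr1 expr1n mulr1.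
Qed.

Unset Implicit Arguments.
Theorem proposition2p11 (T : finType) (le : rel T)
  (hSP : series_parallel le) (c : nat -> rat)
  (hc : forall n : nat,
      Z_coef le n = \sum_(1 <= i < #|T|.+1) c i * frac_coef i n) :
  (forall j : nat, (j <= #|T|)%N ->
     hstar le j =
     \sum_(1 <= i < (#|T| - j).+1)
        (-1) ^+ (#|T| - i + j) * c i * ('C(#|T| - i, j))%:R)
  /\ c #|T| = \sum_(i < #|T|.+1) hstar le i.
Proof.
have [t [f [Hf Hle]]] := hSP.
have [P [P0 [P1 P2]]] := good_iso Hf Hle (good_sp t).
have Npos : (0 < #|T|)%N by rewrite (bij_eq_card Hf) card_sp_gt0.
pose Pc := \sum_(1 <= i < #|T|.+1) c i *: Bp i.
have evPc : forall x, Pc.[x] = \sum_(1 <= i < #|T|.+1) c i * (Bp i).[x].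
  by move=> x; rewrite /Pc horner_sum; apply: eq_bigr => i _; rewrite hornerZ.
have HPc : P = Pc.
  case: (eqVneq (P - Pc) 0) => [/eqP|Hnz]; first by rewrite subr_eq0 => /eqP.
  exfalso.
  pose rs := map (fun k => (k.+1)%:R : rat) (iota 0 (size (P - Pc))).
  have := max_poly_roots Hnz (rs := rs).
  rewrite size_map size_iota ltnn => H; suff : false by []; apply: H.
    apply/allP => x /mapP [k _ ->]; rewrite /root hornerD hornerN -P1 evPc.
    have := hc k.+1; rewrite /Z_coef => ->; rewrite subr_eq0; apply/eqP.
    by apply: eq_bigr => i _; rewrite Bp_nat.
  rewrite map_inj_uniq ?iota_uniq // => x y /eqP; rewrite eqr_nat => /eqP; by case.
have Hplus : forall n, Zplus_coef le n.+1 =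
     \sum_(1 <= i < #|T|.+1) c i * ((-1) ^+ (#|T| + i) * ('C((n + i)%N, i))%:R).
  move=> n; rewrite /Zplus_coef P2 HPc evPc mulr_sumr; apply: eq_bigr => i _.
  rewrite Bp_neg exprD.
  have -> : ((n.+1 + i).-1 = n + i)%N by lia.
  ring.
have HE := hstar_ext Hplus.
split.
- move=> j Hj; rewrite HE.
  rewrite (@big_cat_nat _ _ _ (#|T| - j).+1) //=; last by lia.
  have -> : \sum_((#|T| - j).+1 <= i < #|T|.+1)
       c i * ((-1) ^+ (#|T| + i) * ((-1) ^+ j * ('C((#|T| - i)%N, j))%:R)) = 0.
    rewrite big_nat_cond big1 // => i /andP [/andP [H1 H2] _].
    by rewrite bin_small ?mulr0 //; lia.
  rewrite addr0; apply: eq_big_nat => i /andP [H1 H2].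
  rewrite sign_sub; last by lia.
  rewrite exprD; ring.
- rewrite (eq_bigr (fun j : 'I_#|T|.+1 => \sum_(1 <= i < #|T|.+1)
      c i * ((-1) ^+ (#|T| + i) * ((-1) ^+ j * ('C((#|T| - i)%N, j))%:R)))); last by move=> j _; rewrite HE.
  rewrite exchange_big /=.
  rewrite big_nat_recr //=.
  rewrite big_nat_cond big1 ?add0r; last first.
    move=> i /andP [/andP [H1 H2] _].
    case E: (#|T| - i)%N => [|p]; first by move: H2; rewrite -subn_gt0 E.
    by rewrite -!mulr_sumr altsum bin_small ?mulr0 // -ltnS -E ltnS leq_subr.
  rewrite subnn big_ord_recl /= bin0 expr0 mulr1 big1 ?addr0; last first.
    by move=> k _; rewrite bin0n /bump /= !mulr0.
  by rewrite sign_sub // subnn expr0 !mulr1.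
Qed.
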